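(* Let $\kappa\in\mathcal O_F^\times$ with $d(\kappa)=2e-1$ and let $\delta\in\mathcal O_F^\times$. Then $2^{-1}\pi A(2,2\rho)\perp\langle\Delta\delta\rangle\cong\prec\delta\kappa^{\#},-\delta\kappa^{\#}\kappa\pi^{2-2e},\delta\kappa\succ$.
   Context: $F$ dyadic local field, $\mathcal O_F$, $\mathcal O_F^\times$, uniformizer $\pi$, valuation $\operatorname{ord}$, $e=\operatorname{ord}(2)$; $\mathfrak d(c)=\bigcap_{x\in F}(c-x^2)\mathcal O_F$, $d(c)=\operatorname{ord}(c^{-1}\mathfrak d(c))$; $\rho\in\mathcal O_F^\times$ with $\Delta=1-4\rho$, $\mathfrak d(\Delta)=4\mathcal O_F$. $\gamma A(\xi,\eta)$ is the binary lattice with Gram matrix $\begin{pmatrix}\gamma\xi&\gamma\\\gamma&\gamma\eta\end{pmatrix}$; $\langle a\rangle$ unary lattice. Since $d(\kappa)=2e-1$ is finite and even order, write $\kappa=s^2(1+r\pi^{2e-1})$ with $r,s\in\mathcal O_F^\times$ and set $\kappa^{\#}=1+4\rho r^{-1}\pi^{1-2e}$ (any such choice). BONG notation: $\prec a_1,\ldots,a_k\succ$ is the lattice $L$ having a BONG $x_1,\ldots,x_k$ with $Q(x_i)=a_i$, where $x_1,\ldots,x_k\in FL$ is a BONG of $L$ if $x_1\in L$ with $Q(x_1)\mathcal O_F$ equal to the norm ideal of $L$ (generated by $Q(L)$) and $x_2,\ldots,x_k$ is a BONG of the projection of $L$ onto $(Fx_1)^\perp$. *)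

(* Defs.v *)
From HB Require Import structures.
From mathcomp Require Import all_boot all_order all_algebra.
Set Implicit Arguments. Unset Strict Implicit. Unset Printing Implicit Defensive.
Import Order.TTheory GRing.Theory Num.Theory.
Local Open Scope ring_scope.

Section Defs.
Variables (F : fieldType) (ord : F -> int) (pi : F).

(* x lies in O_F (ord x >= 0, with 0 \in O_F) *)
Definition inO (x : F) : Prop := x = 0 \/ (0 <= ord x)%R.
Definition unitO (x : F) : Prop := x <> 0 /\ ord x = 0.
Definition inI (a y : F) : Prop := exists t, inO t /\ y = a * t.

(* F is a dyadic (non-archimedean) local field with normalized discrete
   valuation ord (ord 0 is irrelevant) and uniformizer pi. *)
Record dyadic_local_field : Prop := {
  ord_mul : forall x y, x <> 0 -> y <> 0 -> ord (x * y) = ord x + ord y;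
  ord_add : forall x y, x <> 0 -> y <> 0 -> x + y <> 0 ->
              (Num.min (ord x) (ord y) <= ord (x + y))%R;
  pi_neq0 : pi <> 0;
  ord_pi : ord pi = 1;
  complete : forall u : nat -> F,
      (forall k : int, exists N, forall m n, (N <= m)%N -> (N <= n)%N ->
          u m = u n \/ (k <= ord (u m - u n))%R) ->
      exists l, forall k : int, exists N, forall n, (N <= n)%N ->
          u n = l \/ (k <= ord (u n - l))%R;
  finite_residue : exists s : seq F, forall x, inO x ->
      exists2 t, t \in s & inI pi (x - t);
  two_neq0 : (2 : F) <> 0;
  dyadic : (0 < ord 2)%R
}.

Definition e_F : int := ord 2.

Definition dfrak (c y : F) : Prop := forall x : F, inI (c - x ^+ 2) y.

Definition d_eq (c : F) (n : int) : Prop :=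
  forall y, dfrak c y <-> inI (c * pi ^ n) y.

(* Quadratic lattices: the O_F-module O_F^n in the quadratic space F^n
   whose bilinear form has Gram matrix G in the standard basis. *)
Definition bil {n} (G : 'M[F]_n) (x y : 'rV[F]_n) : F := (x *m G *m y^T) 0 0.
Definition qf {n} (G : 'M[F]_n) (x : 'rV[F]_n) : F := bil G x x.
Definition std_lattice {n} (x : 'rV[F]_n) : Prop := forall i, inO (x 0 i).

Definition proj {n} (G : 'M[F]_n) (x y : 'rV[F]_n) : 'rV[F]_n :=
  y - (bil G y x / qf G x) *: x.

(* x_1, ..., x_k is a BONG of the lattice L (L an O_F-module, given as a
   predicate on F^n): x_1 \in L, Q(x_1) O_F = n(L) (the ideal generated by
   Q(L)), and x_2,...,x_k is a BONG of the projection of L onto (F x_1)^perp. *)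
Fixpoint isBONG {n} (G : 'M[F]_n) (L : 'rV[F]_n -> Prop) (xs : seq 'rV[F]_n)
  : Prop :=
  match xs with
  | [::] => forall y, L y -> y = 0
  | x :: xs' =>
      L x /\ qf G x <> 0 /\ (forall y, L y -> inI (qf G x) (qf G y)) /\
      isBONG G (fun z => exists2 y, L y & z = proj G x y) xs'
  end.

Definition gramA (gamma xi eta : F) : 'M[F]_2 :=
  \matrix_(i < 2, j < 2)
    (if (i == 0 :> nat) && (j == 0 :> nat) then gamma * xi
     else if (i == 1 :> nat) && (j == 1 :> nat) then gamma * eta
     else gamma).

Definition orth_unary (A : 'M[F]_2) (a : F) : 'M[F]_3 :=
  block_mx A 0 0 (a%:M : 'M[F]_1).

End Defs.

(* Main.v *)
Require Import Defs.
From HB Require Import structures.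
From mathcomp Require Import all_boot all_order all_algebra.
From mathcomp Require Import ring lra zify.
From Stdlib Require Import ClassicalEpsilon.
Set Implicit Arguments. Unset Strict Implicit. Unset Printing Implicit Defensive.
Import Order.TTheory GRing.Theory Num.Theory.
Local Open Scope ring_scope.

Section S.
Variable F : fieldType.
Definition i0 : 'I_3 := @Ordinal 3 0 isT.
Definition i1 : 'I_3 := @Ordinal 3 1 isT.
Definition i2 : 'I_3 := @Ordinal 3 2 isT.

Lemma oentry (A : 'M[F]_2) (a : F) :
  [/\ orth_unary A a i0 i0 = A 0 0, orth_unary A a i0 i1 = A 0 1,
      orth_unary A a i1 i0 = A 1 0, orth_unary A a i1 i1 = A 1 1 &
   [/\ orth_unary A a i0 i2 = 0, orth_unary A a i1 i2 = 0,
      orth_unary A a i2 i0 = 0, orth_unary A a i2 i1 = 0 & orth_unary A a i2 i2 = a]].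
Proof.
have e0 : i0 = lshift 1 (0 : 'I_2) by apply: val_inj.
have e1 : i1 = lshift 1 (1 : 'I_2) by apply: val_inj.
have e2 : i2 = rshift 2 (0 : 'I_1) by apply: val_inj.
rewrite e0 e1 e2.
have h1 := block_mxEul A 0 0 (a%:M : 'M_1). have h2 := block_mxEur A 0 0 (a%:M : 'M_1).
have h3 := block_mxEdl A 0 0 (a%:M : 'M_1). have h4 := block_mxEdr A 0 0 (a%:M : 'M_1).
split; [ exact: (h1 0 0) | exact: (h1 0 1) | exact: (h1 1 0) | exact: (h1 1 1) | split ].
- transitivity ((0 : 'M[F]_(2,1)) 0 0); [exact: (h2 0 0) | by rewrite !mxE].

- transitivity ((0 : 'M[F]_(2,1)) 1 0); [exact: (h2 1 0) | by rewrite !mxE].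

- transitivity ((0 : 'M[F]_(1,2)) 0 0); [exact: (h3 0 0) | by rewrite !mxE].

- transitivity ((0 : 'M[F]_(1,2)) 0 1); [exact: (h3 0 1) | by rewrite !mxE].

- transitivity ((a%:M : 'M[F]_1) 0 0); [exact: (h4 0 0) | by rewrite !mxE].

Qed.

Lemma sum3 (f : 'I_3 -> F) : \sum_(i < 3) f i = f i0 + f i1 + f i2.
Proof.
rewrite !big_ord_recr big_ord0 /= add0r.
congr (f _ + f _ + f _); exact: val_inj.
Qed.

Lemma bilE (g xi eta d : F) (x y : 'rV[F]_3) :
  bil (orth_unary (gramA g xi eta) d) x y =
  g*xi*(x 0 i0)*(y 0 i0) + g*((x 0 i0)*(y 0 i1) + (x 0 i1)*(y 0 i0))
  + g*eta*(x 0 i1)*(y 0 i1) + d*(x 0 i2)*(y 0 i2).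
Proof.
have [E1 E2 E3 E4 [E5 E6 E7 E8 E9]] := oentry (gramA g xi eta) d.
move: E1 E2 E3 E4 E5 E6 E7 E8 E9; rewrite /bil.
generalize (orth_unary (gramA g xi eta) d) => G E1 E2 E3 E4 E5 E6 E7 E8 E9.
rewrite mxE; under eq_bigr => j _ do rewrite !mxE; rewrite !sum3.
rewrite E1 E2 E3 E4 E5 E6 E7 E8 E9 /gramA !mxE /=.
ring.
Qed.
End S.

Section Val.
Variables (F : fieldType) (ord : F -> int) (pi : F).
Hypothesis HF : dyadic_local_field ord pi.

Definition vge (k : int) (x : F) := x = 0 \/ (k <= ord x)%R.

Lemma ordM x y : x != 0 -> y != 0 -> ord (x * y) = ord x + ord y.
Proof. by move=> /eqP hx /eqP hy; apply: (ord_mul HF). Qed.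

Lemma ordD x y : x != 0 -> y != 0 -> x + y != 0 ->
  (Num.min (ord x) (ord y) <= ord (x + y))%R.
Proof. by move=> /eqP hx /eqP hy /eqP hs; apply: (ord_add HF). Qed.

Lemma ord1 : ord 1 = 0.
Proof.
have := ordM (oner_neq0 F) (oner_neq0 F); rewrite mulr1 => h. set o := ord 1 in h *. lia.
Qed.

Lemma ordN1 : ord (-1) = 0.
Proof.
have h1 : (-1 : F) != 0 by rewrite oppr_eq0 oner_neq0.
have := ordM h1 h1; rewrite mulrNN mulr1 ord1 => h; lia.
Qed.

Lemma ordN x : x != 0 -> ord (- x) = ord x.
Proof.
move=> hx; have h1 : (-1 : F) != 0 by rewrite oppr_eq0 oner_neq0.
by rewrite -mulN1r (ordM h1 hx) ordN1 add0r.
Qed.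

Lemma ordV x : x != 0 -> ord x^-1 = - ord x.
Proof.
move=> hx; have hv : x^-1 != 0 by rewrite invr_eq0.
have := ordM hx hv; rewrite mulfV // ord1 => h; lia.
Qed.

Lemma ordX x k : x != 0 -> ord (x ^+ k) = k%:Z * ord x.
Proof.
move=> hx; elim: k => [|k IH]; first by rewrite expr0 ord1 mul0r.
rewrite exprS (ordM hx) ?expf_neq0 // IH; lia.
Qed.

Lemma vge0 k : vge k 0. Proof. by left. Qed.

Lemma vgeW k l x : (k <= l)%R -> vge l x -> vge k x.
Proof. move=> hkl [->|h]; [by left|right; lia]. Qed.

Lemma vgeN k x : vge k x -> vge k (- x).
Proof.
case=> [->|h]; first by rewrite oppr0; left.
have [->|hx] := eqVneq x 0; first by rewrite oppr0; left.
by right; rewrite ordN.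
Qed.

Lemma vgeD k x y : vge k x -> vge k y -> vge k (x + y).
Proof.
case=> [->|hx]; first by rewrite add0r.
case=> [->|hy]; first by rewrite addr0; right.
have [x0|nx] := eqVneq x 0; first by rewrite x0 add0r; right.
have [y0|ny] := eqVneq y 0; first by rewrite y0 addr0; right.
have [s0|ns] := eqVneq (x + y) 0; first by left.
right; have := ordD nx ny ns.
have : (k <= Num.min (ord x) (ord y))%R by rewrite le_min hx hy.
move=> h1 h2; exact: le_trans h1 h2.
Qed.

Lemma vgeB k x y : vge k x -> vge k y -> vge k (x - y).
Proof. by move=> hx hy; apply: vgeD => //; apply: vgeN. Qed.

Lemma vgeM k l x y : vge k x -> vge l y -> vge (k + l) (x * y).
Proof.
case=> [->|hx]; first by rewrite mul0r; left.
case=> [->|hy]; first by rewrite mulr0; left.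
have [x0|nx] := eqVneq x 0; first by rewrite x0 mul0r; left.
have [y0|ny] := eqVneq y 0; first by rewrite y0 mulr0; left.
by right; rewrite (ordM nx ny); lia.
Qed.

Lemma vge_all x : (forall k, vge k x) -> x = 0.
Proof.
move=> h; case: (h (ord x + 1)) => // h'; lia.
Qed.

Lemma vge0M x y : vge 0 x -> vge 0 y -> vge 0 (x * y).
Proof. by move=> hx hy; have := vgeM hx hy; rewrite add0r. Qed.

Lemma vge0X x k : vge 0 x -> vge 0 (x ^+ k).
Proof. move=> hx; elim: k => [|k IH]; last by rewrite exprS; apply: vge0M.
by rewrite expr0; right; rewrite ord1. Qed.

Lemma vge01 : vge 0 1. Proof. by right; rewrite ord1. Qed.

Lemma vge12 : vge 1 2.
Proof. right; have := dyadic HF; lia. Qed.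

Lemma vge02 : vge 0 2.
Proof. exact: vgeW _ vge12. Qed.

Definition isunit x := x != 0 /\ ord x = 0.

Lemma unitP x : unitO ord x -> isunit x.
Proof. by case=> h1 h2; split => //; apply/eqP. Qed.

Lemma unit_vge0 x : isunit x -> vge 0 x.
Proof. by case=> _ h; right; rewrite h. Qed.

Lemma unit_vgeV x : isunit x -> vge 0 x^-1.
Proof. by case=> h1 h2; right; rewrite ordV // h2. Qed.

Lemma unitV x : isunit x -> isunit x^-1.
Proof. by case=> h1 h2; split; [rewrite invr_eq0|rewrite ordV // h2]. Qed.

Lemma unitM x y : isunit x -> isunit y -> isunit (x * y).
Proof. by case=> h1 h2 [h3 h4]; split; [rewrite mulf_neq0|rewrite (ordM) // h2 h4]. Qed.

Lemma unit_not1 x : isunit x -> ~ vge 1 x.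
Proof. by case=> h1 h2 [/eqP|]; [rewrite (negbTE h1)|rewrite h2]. Qed.

Lemma unit_of x : vge 0 x -> ~ vge 1 x -> isunit x.
Proof.
move=> [->|h] h1; first by case: h1; left.
have [x0|nx] := eqVneq x 0; first by case: h1; left.
split => //; apply/eqP; rewrite eq_le h andbT.
by apply/negP => h2; apply: h1; right; lia.
Qed.

Lemma unit_add x y : isunit x -> vge 1 y -> isunit (x + y).
Proof.
move=> hx hy; apply: unit_of.
  by apply: vgeD; [exact: unit_vge0|exact: vgeW _ hy].
move=> h; apply: (unit_not1 hx).
by rewrite -(addrK y x); apply: vgeB.
Qed.


Lemma vge_pi : vge 1 pi.
Proof. by right; rewrite (ord_pi HF). Qed.

Lemma inIpi x : inI ord pi x -> vge 1 x.
Proof.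
case=> t [ht ->]; have := vgeM vge_pi ht; rewrite addr0; exact.
Qed.

Lemma AS z : vge 1 z -> exists y, vge 1 y /\ y ^+ 2 + y = z.
Proof.
move=> hz.
pose f := fun y => z - y ^+ 2.
pose u := fun n => iter n f 0.
have uS n : u n.+1 = z - (u n) ^+ 2 by [].
have h1 n : vge 1 (u n).
  elim: n => [|n IH]; first by left.
  rewrite uS; apply: vgeB => //; apply: (@vgeW 1 (1 + 1)) => //.
  by rewrite expr2; apply: vgeM.
have h2 n : vge (n.+1)%:Z (u n.+1 - u n).
  elim: n => [|n IH]; first by rewrite /u /= /f expr2 mulr0 !subr0.
  have -> : u n.+2 - u n.+1 = - ((u n.+1 - u n) * (u n.+1 + u n)) by rewrite !uS; ring.
  apply: vgeN; apply: (@vgeW _ (n.+1%:Z + 1)); first lia.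
  by apply: vgeM => //; apply: vgeD.
have h3 N m : (N <= m)%N -> vge N%:Z (u m - u N).
  elim: m => [|m IH].
    by rewrite leqn0 => /eqP ->; rewrite subrr; left.
  rewrite leq_eqVlt => /orP [/eqP ->|]; first by rewrite subrr; left.
  rewrite ltnS => hN.
  have -> : u m.+1 - u N = (u m.+1 - u m) + (u m - u N) by ring.
  apply: vgeD; last exact: IH.
  apply: (vgeW _ (h2 m)); lia.
have cauchy : forall k : int, exists N, forall m n, (N <= m)%N -> (N <= n)%N ->
          u m = u n \/ (k <= ord (u m - u n))%R.
  move=> k; exists `|k|%N => m n hm hn.
  have : vge `|k|%N (u m - u n).
    have -> : u m - u n = (u m - u `|k|%N) - (u n - u `|k|%N) by ring.
    by apply: vgeB; apply: h3.
  case=> [/eqP|h]; first by rewrite subr_eq0 => /eqP ->; left.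
  right; apply: le_trans h; lia.
have [l hl] := complete HF cauchy.
have hl' k : exists N, forall n, (N <= n)%N -> vge k (u n - l).
  have [N hN] := hl k; exists N => n /hN [->|h]; [by rewrite subrr; left|by right].
exists l; split.
  have [N hN] := hl' 1.
  have -> : l = u N - (u N - l) by ring.
  by apply: vgeB; [apply: h1|apply: hN].
apply/eqP; rewrite -subr_eq0; apply/eqP; apply: vge_all => k.
have [N hN] := hl' k.
have -> : l ^+ 2 + l - z = (l - u N) * (l + u N) + (l - u N.+1) by rewrite uS; ring.
apply: vgeD; last by rewrite -opprB; apply: vgeN; apply: hN.
rewrite -[k]addr0; apply: vgeM; first by rewrite -opprB; apply: vgeN; apply: hN.
apply: (@vgeW 0 1) => //; apply: vgeD; last exact: h1.
have [N' hN'] := hl' 1.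
have -> : l = u N' - (u N' - l) by ring.
by apply: vgeB; [apply: h1|apply: hN'].
Qed.

Lemma frob x y : vge 0 x -> vge 0 y -> vge 1 (x ^+ 2 - y ^+ 2) -> vge 1 (x - y).
Proof.
move=> hx hy h.
have e : (x - y) ^+ 2 = (x ^+ 2 - y ^+ 2) - 2 * y * (x - y) by ring.
have hd : vge 1 ((x - y) ^+ 2).
  rewrite e; apply: vgeB => //.
  have := vgeM (vgeM vge12 hy) (vgeB hx hy); rewrite !addr0; exact.
have [d0|nd] := eqVneq (x - y) 0; first by left.
case: hd => [/eqP|h2]; first by rewrite expf_eq0 (negbTE nd) andbF.
right; move: h2; rewrite ordX //; lia.
Qed.


Lemma resqrt u : vge 0 u -> exists b, vge 0 b /\ vge 1 (u - b ^+ 2).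
Proof.
move=> hu.
have [s0 Hs0] := finite_residue HF.
pose g n := u ^+ (2 ^ n).
have gS n : g n.+1 = (g n) ^+ 2 by rewrite /g expnSr exprM.
have hg n : vge 0 (g n) by apply: vge0X.
have H n : exists i : 'I_(size s0), vge 1 (g n - nth 0 s0 i).
  have [t ts ht] := Hs0 (g n) (hg n).
  have hi : (index t s0 < size s0)%N by rewrite index_mem.
  by exists (Ordinal hi); rewrite /= nth_index //; apply: inIpi.
pose c n := proj1_sig (constructive_indefinite_description _ (H n)).
have hc n : vge 1 (g n - nth 0 s0 (c n)) := proj2_sig (constructive_indefinite_description _ (H n)).
pose cf (j : 'I_(size s0).+1) := c j.
have : ~~ injectiveb cf.
  apply/negP => /injectiveP /leq_card; rewrite !card_ord; lia.
case/injectivePn => i [j] nij eij.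
have key : forall a b, (a < b)%N -> c a = c b -> exists m, (0 < m)%N /\ vge 1 (g 0 - g m).
  move=> a b ab cab; exists (b - a)%N; split; first lia.
  have hab : vge 1 (g a - g (a + (b - a))%N).
    rewrite subnKC ?(ltnW ab) //.
    have -> : g a - g b = (g a - nth 0 s0 (c a)) - (g b - nth 0 s0 (c b)) by rewrite cab; ring.
    by apply: vgeB.
  move: hab; move: (b - a)%N => m.
  elim: a {ab cab} => [|a IH]; first by rewrite add0n.
  rewrite addSn !gS => h; apply: IH; apply: frob => //.
have [m [m0 hm]] : exists m, (0 < m)%N /\ vge 1 (g 0 - g m).
  have [ij|ji] := ltnP i j.
    exact: (key i j).
  have ji' : (j < i)%N by rewrite ltn_neqAle ji andbT eq_sym; apply: contra nij => /eqP/val_inj ->.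
  exact: (key j i).
exists (g m.-1); split; first exact: hg.
by move: hm; rewrite -gS prednK // /g expn0 expr1.
Qed.

Lemma normrep rho V : isunit rho -> isunit V ->
  exists u1 u2, vge 0 u1 /\ vge 0 u2 /\ u1 ^+ 2 + u1 * u2 + rho * u2 ^+ 2 = V.
Proof.
move=> hr hV.
have hVr : isunit (V / rho) by apply: unitM => //; apply: unitV.
have [b [hb hbV]] := resqrt (unit_vge0 hVr).
have hbu : isunit b.
  apply: unit_of => // h1; apply: (unit_not1 hVr).
  have -> : V / rho = (V / rho - b ^+ 2) + b ^+ 2 by ring.
  apply: vgeD => //; apply: (@vgeW 1 (1 + 1)) => //; rewrite expr2; exact: vgeM.
have [bn0 _] := hbu.
have [[rn0 _] [Vn0 _]] := (hr, hV).
pose z := rho * (V / rho - b ^+ 2) / b ^+ 2.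
have hz : vge 1 z.
  rewrite /z; have := vgeM (vgeM (unit_vge0 hr) hbV) (vge0X 2 (unit_vgeV hbu)).
  by rewrite add0r addr0 exprVn.
have [a [ha hae]] := AS hz.
exists (b * a), b; split; first by apply: vge0M => //; apply: (@vgeW 0 1).
split => //.
have -> : (b * a) ^+ 2 + b * a * b + rho * b ^+ 2 = b ^+ 2 * (a ^+ 2 + a) + rho * b ^+ 2 by ring.
rewrite hae /z; field; by rewrite rn0 bn0.
Qed.

End Val.

Section Alg.
Variable F : fieldType.
Variables (pi q r s u1 u2 y rho delta : F).
Hypotheses (H2 : (2:F) != 0) (Hpi : pi != 0) (Hq : q != 0) (Hr : r != 0) (Hs : s != 0)
  (HD : 1 - 4 * rho != 0) (HW : r + (2 / (pi * q))^+2 * rho * pi != 0).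
Hypothesis Hrho : rho = (y^+2 + y) / (r * pi * q^+2).
Hypothesis Hdelta : delta = (u1^+2 + u1*u2 + rho*u2^+2) / (s^+2 * (r + (2 / (pi * q))^+2 * rho * pi)).

Definition bil3 (a0 a1A a2 b0 b1A b2 : F) :=
  pi * a0 * b0 + pi / 2 * (a0 * b1A + a1A * b0) + pi * rho * a1A * b1A + (1 - 4*rho) * delta * a2 * b2.

Definition epsA := 2 / (pi * q).
Definition DA := 1 - 4 * rho.
Definition fA := epsA / (DA * r * s).
Definition a1A := fA * (-(2*rho + y)*u1 - rho*(1+2*y)*u2).
Definition b1A := fA * ((1+2*y)*u1 + (1 + y - 2*rho)*u2).
Definition c1A := - (r + epsA^+2 * rho * pi) / (r * DA).

Definition TA := 1 + 2 * y.
Definition tA := TA * s / q.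
Definition kSA := 1 + 4 * rho * r^-1 * (pi * q^+2)^-1.
Definition kaA := s^+2 * (1 + r * (pi * q^+2)).

Let HA : r * pi * q ^+ 2 - 4 * (y ^+ 2 + y) != 0.
Proof.
move: HD; rewrite Hrho; apply: contraNneq => E.
rewrite (_ : 1 - _ = (r * pi * q ^+ 2 - 4 * (y ^+ 2 + y)) / (r * pi * q ^+ 2)).
  by rewrite E mul0r.
by field; rewrite Hq Hpi Hr.
Qed.

Let HB : r * (pi * q ^+ 2 * (r * pi * q ^+ 2)) + 4 * (y ^+ 2 + y) != 0.
Proof.
move: HW; rewrite Hrho; apply: contraNneq => E.
rewrite (_ : r + _ = (r * (pi * q ^+ 2 * (r * pi * q ^+ 2)) + 4 * (y ^+ 2 + y)) / (r * pi ^+ 2 * q ^+ 4)).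
  by rewrite E mul0r.
by field; rewrite Hq Hpi Hr.
Qed.

Ltac prep := rewrite /bil3 /a1A /b1A /c1A /fA /DA /epsA /tA /TA /kSA /kaA Hdelta;
  move: HD HW; rewrite Hrho => HD' HW'.
Ltac fin := by field; rewrite ?Hq ?Hpi ?Hr ?HA ?HB ?Hs ?H2.

Lemma I1 : bil3 a1A b1A c1A a1A b1A c1A = delta * kSA.
Proof. prep. fin. Qed.
Lemma I2 : bil3 (q*u1) (q*u2) s (q*u1) (q*u2) s = delta * kaA.
Proof. prep. fin. Qed.
Lemma I3 : bil3 a1A b1A c1A (q*u1) (q*u2) s = 0.
Proof. prep. fin. Qed.
Lemma I4 : bil3 (-(u1 + 2*rho*u2)) (2*u1+u2) 0 a1A b1A c1A = - tA * bil3 a1A b1A c1A a1A b1A c1A.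
Proof. prep. fin. Qed.
Lemma I5 : bil3 (-(u1 + 2*rho*u2)) (2*u1+u2) 0 (q*u1) (q*u2) s = 0.
Proof. prep. fin. Qed.
Lemma I6 : bil3 (-(u1 + 2*rho*u2) + tA * a1A) (2*u1+u2 + tA * b1A) (0 + tA * c1A)
   (-(u1 + 2*rho*u2) + tA * a1A) (2*u1+u2 + tA * b1A) (0 + tA * c1A) = - delta * kSA * kaA * (q^+2)^-1.
Proof. prep. fin. Qed.

Lemma nondeg (w0 w1 w2 : F) : delta != 0 -> u1 ^+ 2 + u1 * u2 + rho * u2 ^+ 2 != 0 ->
  1 + r * (pi * q ^+ 2) != 0 ->
  bil3 w0 w1 w2 a1A b1A c1A = 0 ->
  bil3 w0 w1 w2 (-(u1 + 2*rho*u2) + tA * a1A) (2*u1+u2 + tA * b1A) (0 + tA * c1A) = 0 ->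
  bil3 w0 w1 w2 (q*u1) (q*u2) s = 0 ->
  [/\ w0 = 0, w1 = 0 & w2 = 0].
Proof.
move=> Hd HN HK B1 B2 B3.
have e1 : - (1 + r * (pi * q ^+ 2)) / (pi * q ^+ 2 * r * DA) * (DA * delta * w2) =
   bil3 w0 w1 w2 a1A b1A c1A - (pi * q * r * s)^-1 / q * bil3 w0 w1 w2 (q*u1) (q*u2) s
   - TA / (pi * q * r * DA * s) * (bil3 w0 w1 w2 (-(u1 + 2*rho*u2) + tA * a1A) (2*u1+u2 + tA * b1A) (0 + tA * c1A)
                                  - tA * bil3 w0 w1 w2 a1A b1A c1A).
  rewrite /bil3 /a1A /b1A /c1A /fA /DA /epsA /tA /TA; by field; rewrite ?Hq ?Hpi ?Hr ?HD ?Hs ?H2.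
rewrite B1 B2 B3 !(mulr0, subr0, oppr0) in e1.
have hw2 : w2 = 0.
  have hc : - (1 + r * (pi * q ^+ 2)) / (pi * q ^+ 2 * r * DA) != 0.
    by rewrite mulf_neq0 ?oppr_eq0 ?invr_neq0 // !mulf_neq0 // expf_neq0.
  move/eqP: e1; rewrite mulf_eq0 (negbTE hc) !mulf_eq0 (negbTE HD) (negbTE Hd) /=.
  by move/eqP.
pose g0 := pi * w0 + pi / 2 * w1.
pose g1 := pi / 2 * w0 + pi * rho * w1.
have e2 : g0 * u1 + g1 * u2 = 0.
  apply: (mulfI Hq); rewrite mulr0 -B3 /bil3 hw2 /g0 /g1; ring.
have e3 : g1 * (2 * u1 + u2) - g0 * (u1 + 2 * rho * u2) = 0.
  rewrite -[RHS](subrr 0) -{1}B2 -{2}(mulr0 tA) -{2}B1 /bil3 hw2 /g0 /g1; ring.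
have hg0 : g0 = 0.
  have : 2 * g0 * (u1 ^+ 2 + u1 * u2 + rho * u2 ^+ 2) = (2 * u1 + u2) * (g0 * u1 + g1 * u2)
     - u2 * (g1 * (2 * u1 + u2) - g0 * (u1 + 2 * rho * u2)) by ring.
  rewrite e2 e3 !mulr0 subr0 => /eqP; rewrite !mulf_eq0 (negbTE HN) (negbTE H2) /= orbF.
  by move/eqP.
have hg1 : g1 = 0.
  have : 2 * g1 * (u1 ^+ 2 + u1 * u2 + rho * u2 ^+ 2) = u1 * (g1 * (2 * u1 + u2) - g0 * (u1 + 2 * rho * u2))
     + (u1 + 2 * rho * u2) * (g0 * u1 + g1 * u2) by ring.
  rewrite e2 e3 !mulr0 addr0 => /eqP; rewrite !mulf_eq0 (negbTE HN) (negbTE H2) /= orbF.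
  by move/eqP.
have h4 : (4:F) != 0 by rewrite (_ : (4:F) = 2 * 2) ?mulf_neq0 //; ring.
have hw1 : w1 = 0.
  have : - (pi * DA / 4) * w1 = g1 - g0 / 2 by rewrite /g0 /g1 /DA; field; rewrite H2 h4.
  rewrite hg0 hg1 mul0r subr0 => /eqP; rewrite mulf_eq0 oppr_eq0 !mulf_eq0 invr_eq0 (negbTE Hpi) (negbTE HD).
  by rewrite (negbTE h4) /= => /eqP.
split => //.
have : pi * w0 = g0 - pi / 2 * w1 by rewrite /g0; ring.
by rewrite hg0 hw1 mulr0 subr0 => /eqP; rewrite mulf_eq0 (negbTE Hpi) /= => /eqP.
Qed.

Lemma alg_facts :
  [/\ bil3 a1A b1A c1A a1A b1A c1A = delta * kSA,
       bil3 (q*u1) (q*u2) s (q*u1) (q*u2) s = delta * kaA,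
       bil3 a1A b1A c1A (q*u1) (q*u2) s = 0 &
    [/\ bil3 (-(u1 + 2*rho*u2)) (2*u1+u2) 0 a1A b1A c1A = - tA * bil3 a1A b1A c1A a1A b1A c1A,
       bil3 (-(u1 + 2*rho*u2)) (2*u1+u2) 0 (q*u1) (q*u2) s = 0 &
       bil3 (-(u1 + 2*rho*u2) + tA * a1A) (2*u1+u2 + tA * b1A) (0 + tA * c1A)
        (-(u1 + 2*rho*u2) + tA * a1A) (2*u1+u2 + tA * b1A) (0 + tA * c1A) = - delta * kSA * kaA * (q^+2)^-1]].
Proof. split; [exact: I1|exact: I2|exact: I3|split; [exact: I4|exact: I5|exact: I6]]. Qed.

Lemma alg_nondeg w0 w1 w2 : delta != 0 -> u1 ^+ 2 + u1 * u2 + rho * u2 ^+ 2 != 0 ->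
  1 + r * (pi * q ^+ 2) != 0 ->
  bil3 w0 w1 w2 a1A b1A c1A = 0 ->
  bil3 w0 w1 w2 (-(u1 + 2*rho*u2) + tA * a1A) (2*u1+u2 + tA * b1A) (0 + tA * c1A) = 0 ->
  bil3 w0 w1 w2 (q*u1) (q*u2) s = 0 ->
  [/\ w0 = 0, w1 = 0 & w2 = 0].
Proof.
have _ := (I1, I2, I3, I4, I5, I6).
exact: nondeg.
Qed.
End Alg.

Section Vec.
Variables (F : fieldType) (pi rho delta : F).
Hypothesis H2 : (2:F) != 0.
Let G := orth_unary (gramA (2^-1 * pi) 2 (2 * rho)) ((1 - 4 * rho) * delta).

Lemma bilG x y : bil G x y =
  bil3 pi rho delta (x 0 i0) (x 0 i1) (x 0 i2) (y 0 i0) (y 0 i1) (y 0 i2).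
Proof. by rewrite /G bilE /bil3; field. Qed.

Lemma bilC x y : bil G x y = bil G y x.
Proof. rewrite !bilG /bil3; ring. Qed.

Lemma bilD x y z : bil G (x + y) z = bil G x z + bil G y z.
Proof. rewrite !bilG !mxE /bil3; ring. Qed.

Lemma bilB x y z : bil G (x - y) z = bil G x z - bil G y z.
Proof. rewrite !bilG !mxE /bil3; ring. Qed.

Lemma bilZ a x z : bil G (a *: x) z = a * bil G x z.
Proof. rewrite !bilG !mxE /bil3; ring. Qed.

Lemma proj_bil x y z : qf G x != 0 ->
  bil G (proj G x y) z = bil G y z - bil G y x / qf G x * bil G x z.
Proof. by move=> hx; rewrite /proj bilB bilZ. Qed.

Lemma proj_orth x y : qf G x != 0 -> bil G (proj G x y) x = 0.
Proof. by move=> hx; rewrite proj_bil // -/(qf G x) divfK // subrr. Qed.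

Lemma qf_proj x y : qf G x != 0 ->
  qf G (proj G x y) = qf G y - (bil G y x) ^+ 2 / qf G x.
Proof.
move=> hx.
rewrite [qf G (proj G x y)]/qf (proj_bil y (proj G x y) hx) (bilC y) (bilC x) proj_orth //.
rewrite proj_bil // (bilC x y).
rewrite /qf in hx *; by field.
Qed.

Lemma proj_self c x : qf G x != 0 -> proj G x (c *: x) = 0.
Proof. by move=> hx; rewrite /proj bilZ -/(qf G x) mulfK // subrr. Qed.

Lemma triple x1 x2 x3 y :
  qf G x1 != 0 -> qf G x2 != 0 -> qf G x3 != 0 ->
  bil G x2 x1 = 0 -> bil G x3 x1 = 0 -> bil G x3 x2 = 0 ->
  (forall w, bil G w x1 = 0 -> bil G w x2 = 0 -> bil G w x3 = 0 -> w = 0) ->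
  proj G x2 (proj G x1 y) = (bil G y x3 / qf G x3) *: x3.
Proof.
move=> h1 h2 h3 o21 o31 o32 ND.
apply/eqP; rewrite -subr_eq0; apply/eqP; apply: ND.
- rewrite bilB bilZ o31 mulr0 subr0 proj_bil // o21 mulr0 subr0.
  exact: proj_orth.
- by rewrite bilB bilZ o32 mulr0 subr0 proj_orth.
- rewrite bilB bilZ -/(qf G x3) divfK // proj_bil // (bilC x2 x3) o32 mulr0 subr0.
  by rewrite proj_bil // (bilC x1 x3) o31 mulr0 subr0 subrr.
Qed.
End Vec.
Definition row3 (F : fieldType) (a b c : F) : 'rV[F]_3 := \row_(j < 3) nth 0 [:: a; b; c] j.

Lemma row3E (F : fieldType) (a b c : F) :
  [/\ row3 a b c 0 i0 = a, row3 a b c 0 i1 = b & row3 a b c 0 i2 = c].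
Proof. by rewrite !mxE. Qed.

Lemma row_eq0 (F : fieldType) (w : 'rV[F]_3) :
  w 0 i0 = 0 -> w 0 i1 = 0 -> w 0 i2 = 0 -> w = 0.
Proof.
move=> h0 h1 h2; apply/rowP => j; rewrite mxE.
case: j => [[|[|[|k]]] hk] //.
- by rewrite -h0; congr (w 0 _); apply: val_inj.
- by rewrite -h1; congr (w 0 _); apply: val_inj.
- by rewrite -h2; congr (w 0 _); apply: val_inj.
Qed.

Lemma bong3 (F : fieldType) (ord : F -> int) n (G : 'M[F]_n) (L : 'rV_n -> Prop) x1 x2 x3 :
  L x1 -> qf G x1 <> 0 -> (forall y, L y -> inI ord (qf G x1) (qf G y)) ->
  (exists2 y, L y & x2 = proj G x1 y) -> qf G x2 <> 0 ->
  (forall y, L y -> inI ord (qf G x2) (qf G (proj G x1 y))) ->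
  (exists2 y, L y & x3 = proj G x2 (proj G x1 y)) -> qf G x3 <> 0 ->
  (forall y, L y -> inI ord (qf G x3) (qf G (proj G x2 (proj G x1 y)))) ->
  (forall y, L y -> proj G x3 (proj G x2 (proj G x1 y)) = 0) ->
  isBONG ord G L [:: x1; x2; x3].
Proof.
move=> L1 q1 n1 [y2 Ly2 e2] q2 n2 [y3 Ly3 e3] q3 n3 z.
split => //; split => //; split => //.
split; first by exists y2.
split => //; split.
  by move=> w [y Ly ->]; apply: n2.
split; first by exists (proj G x1 y3) => //; exists y3.
split => //; split.
  by move=> w [v [y Ly ->] ->]; apply: n3.
by move=> w [v [u [y Ly ->] ->] ->]; apply: z.
Qed.

Section Main.
Variables (F : fieldType) (ord : F -> int) (pi : F).
Hypothesis HF : dyadic_local_field ord pi.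

Lemma inI_of a b : a != 0 -> vge ord 0 (b / a) -> inI ord a b.
Proof. by move=> ha hb; exists (b / a); split => //; rewrite mulrC divfK. Qed.

Lemma std_row3 a b c : vge ord 0 a -> vge ord 0 b -> vge ord 0 c ->
  std_lattice ord (row3 a b c).
Proof. by move=> ha hb hc i; rewrite mxE; case: i => [[|[|[|k]]] hk]. Qed.

Ltac intg := repeat first [ assumption | apply: (vge0 ord)
  | apply: (vgeD HF) | apply: (vgeN HF) | apply: (vge0M HF) | apply: (vge0X HF)
  | apply: (unit_vgeV HF) | apply: (unitM HF) | apply: (unitV HF) ].

Lemma main_aux (rho : F) (Hrho : unitO ord rho)
  (kappa : F) (delta : F) (Hdelta : unitO ord delta)
  (r s : F) (Hr : unitO ord r) (Hs : unitO ord s)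
  (Hrs : kappa = s ^+ 2 * (1 + r * pi ^ (2 * e_F ord - 1))) :
  let Delta := 1 - 4 * rho in
  let kappa_sharp := 1 + 4 * rho * r^-1 * pi ^ (1 - 2 * e_F ord) in
  let G := orth_unary (gramA (2^-1 * pi) 2 (2 * rho)) (Delta * delta) in
  exists x1 x2 x3 : 'rV[F]_3,
    isBONG ord G (@std_lattice F ord 3) [:: x1; x2; x3] /\
    qf G x1 = delta * kappa_sharp /\
    qf G x2 = - delta * kappa_sharp * kappa * pi ^ (2 - 2 * e_F ord) /\
    qf G x3 = delta * kappa.
Proof.
move=> Delta ks G.
have H2 : (2:F) != 0 by apply/eqP; exact: (two_neq0 HF).
have Hpi : pi != 0 by apply/eqP; exact: (pi_neq0 HF).
have o2pos := dyadic HF.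
have [n hn] : exists n : nat, e_F ord = (n.+1)%:Z.
  by rewrite /e_F; exists (`|ord 2| - 1)%N; lia.
pose q := pi ^+ n.
have Hq : q != 0 by rewrite expf_neq0.
have E1 : pi ^ (2 * e_F ord - 1) = pi * q ^+ 2.
  rewrite hn (_ : 2 * (n.+1)%:Z - 1 = Posz (n * 2).+1); last lia.
  by rewrite -exprnP exprS exprM.
have E2 : pi ^ (1 - 2 * e_F ord) = (pi * q ^+ 2)^-1.
  rewrite hn (_ : 1 - 2 * (n.+1)%:Z = - Posz (n * 2).+1); last lia.
  by rewrite -exprnN exprS exprM.
have E3 : pi ^ (2 - 2 * e_F ord) = (q ^+ 2)^-1.
  rewrite hn (_ : 2 - 2 * (n.+1)%:Z = - Posz (n * 2)); last lia.
  by rewrite -exprnN exprM.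
rewrite E1 in Hrs; rewrite /ks E2 E3 /G /Delta; subst kappa.
clear ks G Delta E1 E2 E3.
have [rhon0 rho0] := unitP Hrho.
have hrho := unitP Hrho; have hdel := unitP Hdelta; have hr := unitP Hr; have hs := unitP Hs.
have [deln0 _] := hdel; have [rn0 _] := hr; have [sn0 _] := hs.
have hone : isunit ord 1 by split; [exact: oner_neq0|exact: (ord1 HF)].
have o2 : ord 2 = (n.+1)%:Z by rewrite -hn.
have opi := ord_pi HF.
have oq : ord q = n%:Z by rewrite (ordX HF) // opi mulr1.
have v1pi : vge ord 1 pi := vge_pi HF.
have v0pi : vge ord 0 pi by apply: (vgeW _ v1pi).
have v02 : vge ord 0 2 := vge02 HF.
have v12 : vge ord 1 2 := vge12 HF.
have v0q : vge ord 0 q by apply: (vge0X HF).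
have v0rho := unit_vge0 hrho; have v0del := unit_vge0 hdel.
have v0r := unit_vge0 hr; have v0s := unit_vge0 hs.
have v01 : vge ord 0 1 := unit_vge0 hone.
have heps : isunit ord (2 / (pi * q)).
  have hpq : pi * q != 0 by rewrite mulf_neq0.
  split; first by rewrite mulf_neq0 // invr_eq0.
  rewrite (ordM HF) ?invr_eq0 // (ordV HF) // (ordM HF) // opi oq o2; lia.
have v0eps := unit_vge0 heps.
have v14rho : vge ord 1 (4 * rho).
  have -> : (4 : F) * rho = 2 * (2 * rho) by ring.
  have := vgeM HF v12 (vge0M HF v02 v0rho); rewrite addr0; exact.
have hD : isunit ord (1 - 4 * rho) by apply: (unit_add HF) => //; apply: (vgeN HF).
have [Dn0 _] := hD.
have v1W : vge ord 1 ((2 / (pi * q)) ^+ 2 * rho * pi).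
  have := vgeM HF (vge0M HF (vge0X HF 2 v0eps) v0rho) v1pi; rewrite add0r; exact.
have hW : isunit ord (r + (2 / (pi * q)) ^+ 2 * rho * pi) by apply: (unit_add HF).
have [Wn0 _] := hW.
have hs2 : isunit ord (s ^+ 2) by rewrite expr2; apply: (unitM HF).
have hV : isunit ord (delta * s ^+ 2 * (r + (2 / (pi * q)) ^+ 2 * rho * pi)).
  by apply: (unitM HF) => //; apply: (unitM HF).
have v1z : vge ord 1 (rho * r * pi * q ^+ 2).
  have := vgeM HF (vgeM HF (vge0M HF v0rho v0r) v1pi) (vge0X HF 2 v0q).
  by rewrite add0r addr0.
have [y [v1y hy]] := AS HF v1z.
have v0y : vge ord 0 y by apply: (vgeW _ v1y).
have [u1 [u2 [v0u1 [v0u2 hN]]]] := normrep HF hrho hV.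
have Hrho_eq : rho = (y ^+ 2 + y) / (r * pi * q ^+ 2).
  by rewrite hy; field; rewrite rn0 Hpi Hq.
have Hdel_eq : delta = (u1 ^+ 2 + u1 * u2 + rho * u2 ^+ 2) /
    (s ^+ 2 * (r + (2 / (pi * q)) ^+ 2 * rho * pi)).
  have hW' : r * (pi * q ^+ 2) + 4 * rho != 0.
    have -> : r * (pi * q ^+ 2) + 4 * rho = (r + (2 / (pi * q)) ^+ 2 * rho * pi) * (pi * q ^+ 2).
      by field; rewrite Hq Hpi.
    by rewrite mulf_neq0 // mulf_neq0 // expf_neq0.
  by rewrite hN; field; rewrite Hq Hpi hW' sn0.
have [F1 F2 F3 [F4 F5 F6]] := alg_facts H2 Hpi Hq rn0 sn0 Dn0 Wn0 Hrho_eq Hdel_eq.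
have ND := alg_nondeg H2 Hpi Hq rn0 sn0 Dn0 Wn0 Hrho_eq Hdel_eq.
have v04 : vge ord 0 4.
  by rewrite (_ : (4:F) = 2 * 2); [apply: (vge0M HF)|ring].
have hkS : isunit ord (kSA pi q r rho).
  have -> : kSA pi q r rho = 1 + (2 / (pi * q)) ^+ 2 * rho * pi * r^-1.
    by rewrite /kSA; field; rewrite rn0 Hq Hpi.
  apply: (unit_add HF) => //; have := vgeM HF v1W (unit_vgeV HF hr); rewrite addr0; exact.
have hka0 : isunit ord (1 + r * (pi * q ^+ 2)).
  apply: (unit_add HF) => //.
  have := vgeM HF v0r (vgeM HF v1pi (vge0X HF 2 v0q)); rewrite add0r addr0; exact.
have hka : isunit ord (kaA pi q r s) by apply: (unitM HF).
have [kSn0 _] := hkS; have [kan0 _] := hka; have [ka0n0 _] := hka0.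
have HNn0 : u1 ^+ 2 + u1 * u2 + rho * u2 ^+ 2 != 0 by rewrite hN; case: hV.
set G := orth_unary _ _.
have BG : forall x y, bil G x y = bil3 pi rho delta (x 0 i0) (x 0 i1) (x 0 i2) (y 0 i0) (y 0 i1) (y 0 i2).
  exact: (bilG pi rho delta H2).
have bD := bilD pi rho delta H2; have bZ := bilZ pi rho delta H2; have bC := bilC pi rho delta H2.
have BE : forall a b c a' b' c', bil G (row3 a b c) (row3 a' b' c') = bil3 pi rho delta a b c a' b' c'.
  by move=> *; rewrite BG !mxE.
pose a1 := a1A pi q r s u1 u2 y rho; pose b1 := b1A pi q r s u1 u2 y rho.
pose c1 := c1A pi q r rho; pose t := tA q s y.
have va1 : vge ord 0 a1 by rewrite /a1 /a1A /fA /epsA /DA; intg.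
have vb1 : vge ord 0 b1 by rewrite /b1 /b1A /fA /epsA /DA; intg.
have vc1 : vge ord 0 c1 by rewrite /c1 /c1A /epsA /DA; intg.
pose x1 := row3 a1 b1 c1.
pose y2 := row3 (-(u1 + 2*rho*u2)) (2*u1+u2) 0.
pose x3 := row3 (q*u1) (q*u2) s.
pose x2 := y2 + t *: x1.
have cx2 : [/\ x2 0 i0 = -(u1 + 2*rho*u2) + t * a1, x2 0 i1 = 2*u1+u2 + t * b1
   & x2 0 i2 = 0 + t * c1] by rewrite /x2 /y2 /x1 !mxE.
have Q1 : qf G x1 = delta * kSA pi q r rho by rewrite /qf BE.
have Q3 : qf G x3 = delta * kaA pi q r s by rewrite /qf BE.
have Q2 : qf G x2 = - delta * kSA pi q r rho * kaA pi q r s / q ^+ 2.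
  by rewrite /qf BG; case: cx2 => -> -> ->.
have hQ1 : qf G x1 != 0 by rewrite Q1 mulf_neq0.
have hQ3 : qf G x3 != 0 by rewrite Q3 mulf_neq0.
have hQ2 : qf G x2 != 0.
  by rewrite Q2 !mulf_neq0 ?oppr_eq0 ?invr_eq0 ?expf_neq0.
have B21 : bil G x2 x1 = 0.
  rewrite /x2 bD bZ !BE F4 -/a1 -/b1 -/c1 -/t; ring.
have B31 : bil G x3 x1 = 0 by rewrite bC BE.
have B32 : bil G x3 x2 = 0 by rewrite bC /x2 bD bZ !BE F5 F3 mulr0 addr0.
have ND' : forall w, bil G w x1 = 0 -> bil G w x2 = 0 -> bil G w x3 = 0 -> w = 0.
  move=> w h1 h2 h3; rewrite !BG in h1 h2 h3.
  move: h2; case: cx2 => -> -> -> h2.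
  move: h1 h3; rewrite /x1 /x3 !mxE /= => h1 h3.
  have [e0 e1 e2] := ND _ _ _ deln0 HNn0 ka0n0 h1 h2 h3.
  exact: row_eq0.
have TR y := triple H2 y hQ1 hQ2 hQ3 B21 B31 B32 ND'.
have qfZ : forall c x, qf G (c *: x) = c ^+ 2 * qf G x.
  by move=> c x; rewrite /qf bZ bC bZ; ring.
have Lc : forall z, std_lattice ord z ->
  [/\ vge ord 0 (z 0 i0), vge ord 0 (z 0 i1) & vge ord 0 (z 0 i2)].
  by move=> z Lz; split; apply: Lz.
have QY : forall z, std_lattice ord z -> vge ord 0 (qf G z).
  move=> z /Lc [h0 h1 h2]; rewrite /qf BG.
  have -> : bil3 pi rho delta (z 0 i0) (z 0 i1) (z 0 i2) (z 0 i0) (z 0 i1) (z 0 i2) =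
    pi * ((z 0 i0) ^+ 2 + (z 0 i0) * (z 0 i1) + rho * (z 0 i1) ^+ 2) + (1 - 4 * rho) * delta * (z 0 i2) ^+ 2.
    by rewrite /bil3; field.
  intg.
have hdkS : isunit ord (delta * kSA pi q r rho) by apply: (unitM HF).
have hdka : isunit ord (delta * kaA pi q r s) by apply: (unitM HF).
have hdkk : isunit ord (delta * kSA pi q r rho * kaA pi q r s) by apply: (unitM HF).
exists x1, x2, x3; split; last by split; [|split].
apply: bong3.
- by apply: std_row3.
- exact/eqP.
- move=> z Lz; apply: inI_of => //; rewrite Q1; apply: (vge0M HF); first exact: QY.
  exact: (unit_vgeV HF).
- exists y2; first by apply: std_row3; intg.
  rewrite /proj.
  have -> : bil G y2 x1 / qf G x1 = - t.
    by rewrite /qf !BE F4 -/a1 -/b1 -/c1 -/t mulfK // -(BE a1 b1 c1 a1 b1 c1).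
  by rewrite scaleNr opprK.
- exact/eqP.
- move=> z Lz; apply: inI_of => //; rewrite qf_proj //.
  have [h0 h1 h2] := Lc z Lz.
  have HB : q * bil G z x1 = pi * q * (z 0 i0 * a1 + rho * z 0 i1 * b1)
       + (2 / (pi * q))^-1 * (z 0 i0 * b1 + z 0 i1 * a1) + q * ((1 - 4 * rho) * delta) * z 0 i2 * c1.
    rewrite BG /x1 !mxE /= /bil3; field; by rewrite Hq Hpi.
  have -> : (qf G z - bil G z x1 ^+ 2 / qf G x1) / qf G x2 =
     - ((q ^+ 2 * qf G z - (q * bil G z x1) ^+ 2 * (delta * kSA pi q r rho)^-1)
         * (delta * kSA pi q r rho * kaA pi q r s)^-1).
    rewrite Q2 Q1; field; by rewrite Hq kSn0 kan0 deln0 oppr_eq0.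
  rewrite HB; have ? := QY z Lz; intg.
- exists (row3 0 0 (kaA pi q r s / ((1 - 4 * rho) * s))).
    by apply: std_row3; rewrite /kaA; intg.
  rewrite TR BE.
  have -> : bil3 pi rho delta 0 0 (kaA pi q r s / ((1 - 4 * rho) * s)) (q * u1) (q * u2) s
      = delta * kaA pi q r s.
    rewrite /bil3; field; by rewrite sn0 Dn0.
  by rewrite Q3 divff ?mulf_neq0 // scale1r.
- exact/eqP.
- move=> z Lz; apply: inI_of => //; rewrite TR qfZ mulfK //.
  have [h0 h1 h2] := Lc z Lz.
  apply: (vge0X HF); rewrite Q3 BG /x3 !mxE /=.
  have -> : bil3 pi rho delta (z 0 i0) (z 0 i1) (z 0 i2) (q * u1) (q * u2) s =
      pi * q * (z 0 i0 * u1 + rho * z 0 i1 * u2) + (2 / (pi * q))^-1 * (z 0 i0 * u2 + z 0 i1 * u1)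
      + (1 - 4 * rho) * delta * z 0 i2 * s.
    rewrite /bil3; field; by rewrite Hq Hpi.
  intg.
- by move=> z Lz; rewrite TR proj_self.
Qed.
End Main.

Unset Implicit Arguments.
Theorem lemma3p9 (F : fieldType) (ord : F -> int) (pi : F)
  (HF : dyadic_local_field ord pi)
  (rho : F) (Hrho : unitO ord rho)
  (HDelta : forall y, dfrak ord (1 - 4 * rho) y <-> inI ord 4 y)
  (kappa : F) (Hkappa : unitO ord kappa)
  (Hdk : d_eq ord pi kappa (2 * e_F ord - 1))
  (delta : F) (Hdelta : unitO ord delta)
  (r s : F) (Hr : unitO ord r) (Hs : unitO ord s)
  (Hrs : kappa = s ^+ 2 * (1 + r * pi ^ (2 * e_F ord - 1))) :
  let Delta := 1 - 4 * rho in
  let kappa_sharp := 1 + 4 * rho * r^-1 * pi ^ (1 - 2 * e_F ord) in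
  let G := orth_unary (gramA (2^-1 * pi) 2 (2 * rho)) (Delta * delta) in
  exists x1 x2 x3 : 'rV[F]_3,
    isBONG ord G (@std_lattice F ord 3) [:: x1; x2; x3] /\
    qf G x1 = delta * kappa_sharp /\
    qf G x2 = - delta * kappa_sharp * kappa * pi ^ (2 - 2 * e_F ord) /\
    qf G x3 = delta * kappa.
Proof.
exact: (main_aux HF Hrho Hdelta Hr Hs Hrs).
Qed.
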